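(* Let $A$ be a finite-dimensional algebra over an algebraically closed field $\Bbbk$, and let $X$ be a finite-dimensional left $A$-module. Then $\operatorname{NEnd}(X)=\{N\in\operatorname{End}_A(X): N^k=0\text{ for some }k\ge0\}$ is an irreducible algebraic variety. *)

(* Defs.v *)
From HB Require Import structures.
From mathcomp Require Import all_boot all_order all_algebra all_field.
From mathcomp Require Import mpoly.
Set Implicit Arguments. Unset Strict Implicit. Unset Printing Implicit Defensive.
Import GRing.Theory.
Local Open Scope ring_scope.

(* A finite-dimensional left A-module X of dimension n over k, given by its
   structure map rho : A -> 'M[k]_n, a unital k-algebra homomorphism. *)
Definition is_module_rep (k : fieldType) (A : falgType k) (n : nat)
  (rho : A -> 'M[k]_n) : Prop :=
  [/\ forall (c : k) (a b : A), rho (c *: a + b) = c *: rho a + rho b,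
      rho 1 = 1%:M
    & forall a b : A, rho (a * b) = rho a *m rho b].

Definition is_End (k : fieldType) (A : falgType k) (n : nat)
  (rho : A -> 'M[k]_n) (N : 'M[k]_n) : Prop :=
  forall a : A, N *m rho a = rho a *m N.

(* matrix powers (valid for every n, including n = 0) *)
Definition mxpow (k : fieldType) (n : nat) (N : 'M[k]_n) (m : nat) : 'M[k]_n :=
  iter m (mulmx N) 1%:M.

Definition NEnd (k : fieldType) (A : falgType k) (n : nat)
  (rho : A -> 'M[k]_n) (N : 'M[k]_n) : Prop :=
  is_End rho N /\ exists m : nat, mxpow N m = 0.

Definition mx_coords (k : fieldType) (n : nat) (M : 'M[k]_n) : 'I_(n * n) -> k :=
  fun i => mxvec M 0 i.

Definition zariski_closed (k : fieldType) (n : nat) (Z : 'M[k]_n -> Prop) : Prop :=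
  exists F : {mpoly k[n * n]} -> Prop,
    forall M, Z M <-> (forall p, F p -> p.@[mx_coords M] = 0).

Definition zariski_irreducible (k : fieldType) (n : nat) (S : 'M[k]_n -> Prop) : Prop :=
  (exists M, S M) /\
  forall Z1 Z2 : 'M[k]_n -> Prop, zariski_closed Z1 -> zariski_closed Z2 ->
    (forall M, S M -> Z1 M \/ Z2 M) ->
    (forall M, S M -> Z1 M) \/ (forall M, S M -> Z2 M).

Definition irreducible_variety (k : fieldType) (n : nat) (S : 'M[k]_n -> Prop) : Prop :=
  zariski_closed S /\ zariski_irreducible S.

(* Main.v *)
Require Import Defs.
From HB Require Import structures.
From mathcomp Require Import all_boot all_order all_algebra all_field.
From mathcomp Require Import mpoly zify.
From Stdlib Require Import Classical ClassicalEpsilon.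
Set Implicit Arguments. Unset Strict Implicit. Unset Printing Implicit Defensive.
Import GRing.Theory.
Local Open Scope ring_scope.
Section A.
Variable k : fieldType.

Definition subalg n (E : 'M[k]_n -> Prop) :=
  [/\ E 1%:M, (forall x y, E x -> E y -> E (x *m y))
    & (forall c x y, E x -> E y -> E (c *: x + y))].

Definition linsub n (L : 'M[k]_n -> Prop) :=
  L 0 /\ (forall c x y, L x -> L y -> L (c *: x + y)).

Definition nilp n (x : 'M[k]_n) := exists m : nat, x ^+ m = 0.

Section SA.
Variables (n : nat) (E : 'M[k]_n -> Prop) (HE : subalg E).

Lemma sa1 : E 1%:M. Proof. by case: HE. Qed.
Lemma saM x y : E x -> E y -> E (x *m y). Proof. by case: HE => _ h _; apply: h. Qed.
Lemma saL c x y : E x -> E y -> E (c *: x + y). Proof. by case: HE => _ _ h; apply: h. Qed.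
Lemma sa0 : E 0.
Proof. by have := saL (-1) sa1 sa1; rewrite scaleN1r addNr. Qed.
Lemma saD x y : E x -> E y -> E (x + y).
Proof. by move=> Ex Ey; have := saL 1 Ex Ey; rewrite scale1r. Qed.
Lemma saZ c x : E x -> E (c *: x).
Proof. by move=> Ex; have := saL c Ex sa0; rewrite addr0. Qed.
Lemma saN x : E x -> E (- x).
Proof. by move=> Ex; have := saZ (-1) Ex; rewrite scaleN1r. Qed.
Lemma saB x y : E x -> E y -> E (x - y).
Proof. by move=> Ex Ey; apply: saD Ex (saN Ey). Qed.
Lemma saX x m : E x -> E (x ^+ m).
Proof. by move=> Ex; elim: m => [|m IH]; rewrite ?expr0 ?exprS; [apply: sa1 | apply: saM]. Qed.
Lemma saC c : E (c%:M).
Proof. by rewrite -scalemx1; apply: saZ sa1. Qed.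
Lemma sa_sum I (r : seq I) (P : pred I) (F : I -> 'M_n) :
  (forall i, P i -> E (F i)) -> E (\sum_(i <- r | P i) F i).
Proof. by move=> h; apply: (big_ind E sa0 saD). Qed.
End SA.

Lemma sa_horner n (E : 'M[k]_n.+1 -> Prop) (HE : subalg E) u p :
  E u -> E (horner_mx u p).
Proof.
move=> Eu; elim/poly_ind: p => [|p c IH]; first by rewrite rmorph0; apply: sa0.
rewrite rmorphD rmorphM /= horner_mx_X horner_mx_C.
by apply: saD => //; [apply: saM | apply: saC].
Qed.

Lemma sa_inv n (E : 'M[k]_n -> Prop) (HE : subalg E) u :
  E u -> u \in unitmx -> E (invmx u).
Proof.
case: n E HE u => [|n] E HE u Eu Uu.
  have -> : invmx u = 1%:M by apply/matrixP => [[]].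
  exact: sa1.
set p := char_poly u.
have r0 : root (p - (p`_0)%:P) 0 by rewrite /root hornerD hornerN hornerC horner_coef0 subrr.
have /factor_theorem [q Hq] := r0.
have CH := Cayley_Hamilton u; rewrite -/p in CH.
have Hp : p = q * 'X + (p`_0)%:P by apply/eqP; rewrite -subr_eq Hq polyC0 subr0.
have c0 : p`_0 != 0.
  rewrite /p char_poly_det mulf_eq0 negb_or signr_eq0 /=.
  by rewrite -unitfE -unitmxE.
have H1 : horner_mx u q *m u = - (p`_0)%:M.
  apply/eqP; rewrite -subr_eq0 opprK.
  by move: CH; rewrite {1}Hp rmorphD rmorphM /= horner_mx_X horner_mx_C => ->.
have H2 : (- (p`_0)^-1 *: horner_mx u q) *m u = 1%:M.
  by rewrite -scalemxAl H1 scaleNr scalerN opprK scale_scalar_mx mulVf.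
have -> : invmx u = - (p`_0)^-1 *: horner_mx u q.
  by rewrite -[invmx u]mul1mx -H2 -mulmxA mulmxV // mulmx1.
by apply: saZ => //; apply: sa_horner.
Qed.

End A.
Section B.
Variable k : fieldType.

Lemma classic_pred (P : nat -> Prop) : exists p : pred nat, forall r, p r <-> P r.
Proof.
exists (fun r => if excluded_middle_informative (P r) then true else false) => r.
by case: excluded_middle_informative.
Qed.

Lemma span_exists n (S : 'rV[k]_n -> Prop) :
  S 0 -> (forall c x y, S x -> S y -> S (c *: x + y)) ->
  exists U : 'M[k]_n, forall v, S v <-> (v <= U)%MS.
Proof.
move=> S0 SL.
pose P r := exists U : 'M[k]_n, \rank U = r /\ (forall v, (v <= U)%MS -> S v).
have [p Hp] := classic_pred P.
have exP : exists r, p r.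
  exists 0%N; apply/Hp; exists 0; split; first by rewrite mxrank0.
  by move=> v; rewrite submx0 => /eqP ->.
have ubP : forall r, p r -> (r <= n)%N.
  by move=> r /Hp [U [<- _]]; apply: rank_leq_col.
have := ex_maxnP exP ubP; case=> r /Hp [U [rU SU]] maxr.
exists U => v; split; last exact: SU.
move=> Sv; apply: contraT => nvU.
have lt : (\rank U < \rank (U + v)%MS)%N.
  rewrite (ltn_leqif (mxrank_leqif_sup (addsmxSl U v))).
  by apply: contra nvU => /(submx_trans (addsmxSr U v)).
have : p (\rank (U + v)%MS).
  apply/Hp; exists (U + v)%MS; split => // w /sub_addsmxP [[u1 u2] /= ->].
  rewrite [u2]mx11_scalar mul_scalar_mx addrC; apply: SL => //.
  by apply: SU; apply: submxMl.
by move/maxr; rewrite -rU leqNgt lt.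
Qed.

End B.
Section C.
Variable k : closedFieldType.

Definition irr m (E : 'M[k]_m -> Prop) :=
  forall U : 'M[k]_m, (forall x, E x -> (U *m x <= U)%MS) -> U = 0 \/ row_full U.

Lemma irr_orbit m (E : 'M[k]_m -> Prop) : subalg E -> irr E ->
  forall w : 'rV_m, w != 0 -> forall v, exists x, E x /\ v = w *m x.
Proof.
move=> HE Hirr w nw0.
pose S v := exists x, E x /\ v = w *m x.
have S0 : S 0 by exists 0; split; [apply: sa0 | rewrite mulmx0].
have SL : forall c x y, S x -> S y -> S (c *: x + y).
  move=> c _ _ [x [Ex ->]] [y [Ey ->]]; exists (c *: x + y); split.
    exact: saL.
  by rewrite mulmxDr scalemxAr.
have [U HU] := span_exists S0 SL.
have stab : forall x, E x -> (U *m x <= U)%MS.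
  move=> x Ex; apply/row_subP => i; rewrite row_mul.
  have [y [Ey ->]] : S (row i U) by apply/HU; apply: row_sub.
  by apply/HU; exists (y *m x); split; [apply: saM | rewrite mulmxA].
case: (Hirr U stab) => [U0|fU] v.
  have : S w by exists 1%:M; split; [apply: sa1 | rewrite mulmx1].
  by move/HU; rewrite U0 submx0 (negbTE nw0).
by apply/HU; apply: submx_full.
Qed.

Definition trE m (E : 'M[k]_m -> Prop) := fun x => E x^T.

Lemma subalg_tr m (E : 'M[k]_m -> Prop) : subalg E -> subalg (trE E).
Proof.
move=> HE; split; rewrite /trE.
- by rewrite tr_scalar_mx; apply: sa1.
- by move=> x y Ex Ey; rewrite trmx_mul; apply: saM.
- by move=> c x y Ex Ey; rewrite linearD linearZ /=; apply: saL.
Qed.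

Lemma irr_tr m (E : 'M[k]_m -> Prop) : subalg E -> irr E -> irr (trE E).
Proof.
move=> HE Hirr U stU.
pose K := kermx U^T.
have stK : forall y, E y -> (K *m y <= K)%MS.
  move=> y Ey; apply/sub_kermxP.
  have : (U *m y^T <= U)%MS by apply: stU; rewrite /trE trmxK.
  case/submxP=> D HD.
  have : y *m U^T = U^T *m D^T by rewrite -[y]trmxK -trmx_mul HD trmx_mul.
  by rewrite -mulmxA; move=> ->; rewrite mulmxA mulmx_ker mul0mx.
have rK := mxrank_ker U^T; rewrite mxrank_tr in rK.
have rU := rank_leq_col U.
case: (Hirr K stK) => [K0|fK].
  right; rewrite /row_full; apply/eqP.
  by move: rK; rewrite -/K K0 mxrank0; lia.
left; apply/eqP; rewrite -mxrank_eq0.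
by move: rK; move/eqP: fK => ->; lia.
Qed.

Lemma eig_in r m (V : 'M[k]_(r, m)) (f : 'M[k]_m) :
  row_free V -> (0 < r)%N -> (V *m f <= V)%MS ->
  exists y : 'rV_m, [/\ y != 0, (y <= V)%MS & exists l, y *m f = l *: y].
Proof.
case: r V => // r V fV _ sV.
pose g := V *m f *m pinvmx V.
have gV : g *m V = V *m f by rewrite mulmxKpV.
have : exists l, root (char_poly g) l.
  by apply/closed_rootP; rewrite size_char_poly.
case=> l; rewrite -eigenvalue_root_char => /eigenvalueP [v vg nv0].
exists (v *m V); split.
- by apply: contra nv0; rewrite -(mul0mx _ V) => /eqP /(row_free_inj fV) ->.
- exact: submxMl.
- by exists l; rewrite -mulmxA -gV mulmxA vg scalemxAl.
Qed.

Lemma rank_one_exists m (E : 'M[k]_m -> Prop) : subalg E -> irr E -> (0 < m)%N ->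
  exists T, E T /\ \rank T = 1%N.
Proof.
move=> HE Hirr m0.
pose P r := exists T, E T /\ \rank T = r /\ (0 < r)%N.
have [p Hp] := classic_pred P.
have exP : exists r, p r.
  by exists m; apply/Hp; exists 1%:M; split; [apply: sa1 | rewrite mxrank1].
have := ex_minnP exP; case=> r /Hp [T [ET [rT r0]]] minr.
exists T; split => //; rewrite rT.
apply/eqP; rewrite eqn_leq r0 andbT leqNgt; apply/negP => r2.
have T0 : T != 0 by rewrite -mxrank_eq0 rT -lt0n.
have [i rowi] : exists i, row i T != 0.
  apply/existsP; apply: contraR T0 => /existsPn h; apply/eqP/row_matrixP => i.
  by rewrite row0; apply/eqP; move: (h i); rewrite negbK.
set y1 := row i T.
have [j rowj] : exists j, ~~ (row j T <= y1)%MS.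
  apply/existsP; apply: contraLR r2 => /existsPn h.
  have : (T <= y1)%MS by apply/row_subP => j; move: (h j); rewrite negbK.
  by move/mxrankS; rewrite -leqNgt rT => /leq_trans; apply; apply: rank_leq_row.
set y2 := row j T.
have [A [EA HA]] := irr_orbit HE Hirr rowi ('e_j).
pose V := row_base T.
have sV : (V *m (A *m T) <= V)%MS.
  by rewrite (eqmxMr _ (eq_row_base T)) eq_row_base mulmxA submxMl.
have rb0 : (0 < \rank T)%N by rewrite rT.
have [y [y0 yV [l yl]]] := eig_in (row_base_free T) rb0 sV.
have {yV} : (y <= T)%MS by rewrite -(eq_row_base T).
case/submxP=> z0 Hz0.
pose T' := T *m A *m T - l *: T.
have ET' : E T' by apply: saB => //; [apply: saM => //; apply: saM | apply: saZ].
have kT : (kermx T <= kermx T')%MS.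
  apply/sub_kermxP; rewrite /T' mulmxBr -scalemxAr !mulmxA mulmx_ker.
  by rewrite !mul0mx scaler0 subrr.
have kz : (z0 <= kermx T')%MS.
  apply/sub_kermxP; rewrite /T' mulmxBr -scalemxAr !mulmxA -Hz0.
  by rewrite -mulmxA yl subrr.
have nkz : ~~ (z0 <= kermx T)%MS.
  by apply: contra y0 => /sub_kermxP; rewrite -Hz0 => ->.
have lt : (\rank (kermx T) < \rank (kermx T'))%N.
  rewrite (ltn_leqif (mxrank_leqif_sup kT)).
  by apply: contra nkz => /(submx_trans kz).
have T'0 : T' != 0.
  have : row j T - l *: y1 != 0.
    rewrite subr_eq0; apply: contra rowj => /eqP ->.
    by rewrite scalemx_sub.
  apply: contra => /eqP T'0.
  have : row i T' = 0 by rewrite T'0 row0.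
  by rewrite /T' linearB linearZ /= !row_mul -/y1 -HA -rowE => ->.
have rT'0 : (0 < \rank T')%N by rewrite lt0n mxrank_eq0.
have := minr _ (iffRL (Hp _) (ex_intro _ T' (conj ET' (conj erefl rT'0)))).
rewrite -rT => h.
move: lt; rewrite !mxrank_ker; have := rank_leq_row T; have := rank_leq_row T'.
lia.
Qed.

Lemma burnside m (E : 'M[k]_m -> Prop) : subalg E -> irr E -> forall a, E a.
Proof.
move=> HE Hirr a.
case: m E HE Hirr a => [|m] E HE Hirr a.
  have -> : a = 1%:M by apply/matrixP => [[]].
  exact: sa1.
have [T [ET rT]] := rank_one_exists HE Hirr (ltn0Sn m).
pose z := col_ebase T *m delta_mx 0 (0 : 'I_1).
pose w := delta_mx (0 : 'I_1) 0 *m row_ebase T.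
have Tzw : T = z *m w.
  have -> : z *m w = col_ebase T *m (delta_mx 0 0) *m row_ebase T.
    by rewrite /z /w mulmxA -(mulmxA (col_ebase T)) mul_delta_mx.
  rewrite -{1}(mulmx_ebase T) rT; congr (_ *m _ *m _).
  apply/matrixP => i j; rewrite !mxE.
  by case: i j => [[|i] ?] [[|j] ?]; rewrite /= ?eqE /= ?andbF.
have T0 : T != 0 by rewrite -mxrank_eq0 rT.
have w0 : w != 0 by apply: contra T0 => /eqP; rewrite Tzw => ->; rewrite mulmx0.
have z0 : z^T != 0.
  by apply: contra T0 => /eqP/(congr1 trmx); rewrite trmxK trmx0 Tzw => ->; rewrite mul0mx.
have Hdelta : forall i j, E (delta_mx i j).
  move=> i j.
  have [X [EX HX]] := irr_orbit (subalg_tr HE) (irr_tr HE Hirr) z0 (delta_mx 0 i).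
  have [Y [EY HY]] := irr_orbit HE Hirr w0 (delta_mx 0 j).
  have -> : delta_mx i j = X^T *m T *m Y.
    rewrite Tzw mulmxA -mulmxA -HY.
    have -> : X^T *m z = delta_mx i 0 by rewrite -[z]trmxK -trmx_mul -HX trmx_delta.
    by rewrite mul_delta_mx.
  by apply: saM => //; apply: saM.
rewrite (matrix_sum_delta a); apply: sa_sum => // i _; apply: sa_sum => // j _.
by apply: saZ.
Qed.

End C.
Section D.
Variable k : fieldType.

Lemma nilp_pow0 n (x : 'M[k]_n) a b : x ^+ a = 0 -> x ^+ (a + b) = 0.
Proof. by move=> h; rewrite exprD h mul0r. Qed.

Lemma conj_pow n (u x : 'M[k]_n) j : u \in unitmx ->
  (u *m x *m invmx u) ^+ j = u *m x ^+ j *m invmx u.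
Proof.
move=> Uu; elim: j => [|j IH]; first by rewrite !expr0 mulmx1 mulmxV.
rewrite exprS IH exprS -!mulmxE.
have -> : u *m x *m invmx u *m (u *m x ^+ j *m invmx u) = u *m x *m (invmx u *m u) *m x ^+ j *m invmx u.
  by rewrite !mulmxA.
by rewrite mulVmx // mulmx1 -!mulmxA.
Qed.

Lemma nilp_conj n (u x : 'M[k]_n) : u \in unitmx -> nilp x -> nilp (u *m x *m invmx u).
Proof. by move=> Uu [j hj]; exists j; rewrite conj_pow // hj mulmx0 mul0mx. Qed.

Section Blk.
Variables m n : nat.
Implicit Types x y : 'M[k]_(m + n).

Definition lowb x := ursubmx x = 0.

Lemma lowb_mul x y : lowb x -> lowb y ->
  [/\ ulsubmx (x *m y) = ulsubmx x *m ulsubmx y,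
      drsubmx (x *m y) = drsubmx x *m drsubmx y & lowb (x *m y)].
Proof.
rewrite /lowb => hx hy.
rewrite -[x]submxK -[y]submxK hx hy mulmx_block.
by rewrite !block_mxKul !block_mxKdr block_mxKur !mulmx0 !mul0mx !addr0 add0r.
Qed.

Lemma lowb1 : lowb 1%:M.
Proof. by rewrite /lowb (scalar_mx_block m n) block_mxKur. Qed.

Lemma ul1 : ulsubmx (1%:M : 'M[k]_(m + n)) = 1%:M.
Proof. by rewrite (scalar_mx_block m n) block_mxKul. Qed.
Lemma dr1 : drsubmx (1%:M : 'M[k]_(m + n)) = 1%:M.
Proof. by rewrite (scalar_mx_block m n) block_mxKdr. Qed.

Lemma lowb_pow x j : lowb x ->
  [/\ ulsubmx (x ^+ j) = ulsubmx x ^+ j, drsubmx (x ^+ j) = drsubmx x ^+ j & lowb (x ^+ j)].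
Proof.
move=> hx; elim: j => [|j [IH1 IH2 IH3]].
  by rewrite !expr0 ul1 dr1; split => //; apply: lowb1.
have [h1 h2 h3] := lowb_mul hx IH3.
by rewrite !exprS h1 h2 IH1 IH2.
Qed.

Lemma lowb_nil x : lowb x -> nilp (ulsubmx x) -> nilp (drsubmx x) -> nilp x.
Proof.
move=> hx [a ha] [b hb].
have [h1 h2 h3] := lowb_pow (a + b) hx.
have ha' := nilp_pow0 b ha; have hb' := nilp_pow0 a hb; rewrite addnC in hb'.
exists ((a + b) * 2)%N; rewrite exprM expr2 -mulmxE.
move: h1 h2 h3; set y := x ^+ (a + b) => h1 h2 h3.
rewrite /lowb in h3; rewrite -[y]submxK h1 h2 h3 ha' hb' mulmx_block.
by rewrite !mulmx0 !mul0mx !addr0 block_mx0.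
Qed.

Lemma lowb_det x : lowb x -> \det x = \det (ulsubmx x) * \det (drsubmx x).
Proof. by rewrite /lowb => hx; rewrite -{1}[x]submxK hx det_lblock. Qed.

Lemma lowb_unit x : lowb x -> (x \in unitmx) = (ulsubmx x \in unitmx) && (drsubmx x \in unitmx).
Proof. by move=> hx; rewrite !unitmxE lowb_det // unitrM. Qed.

Lemma inv_of_mul1 p (A B : 'M[k]_p) : A *m B = 1%:M -> B = invmx A.
Proof.
move=> h; have [UA UB] := mulmx1_unit h.
by rewrite -[B]mul1mx -(mulVmx UA) -mulmxA h mulmx1.
Qed.

Lemma lowb_inv x : lowb x -> x \in unitmx -> lowb (invmx x) ->
  ulsubmx (invmx x) = invmx (ulsubmx x) /\ drsubmx (invmx x) = invmx (drsubmx x).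
Proof.
move=> hx Ux hi; have [h1 h2 _] := lowb_mul hx hi.
rewrite mulmxV // in h1 h2; rewrite ul1 in h1; rewrite dr1 in h2.
by split; apply: inv_of_mul1.
Qed.

Lemma lowb_conj u x : lowb u -> u \in unitmx -> lowb (invmx u) -> lowb x ->
  [/\ ulsubmx (u *m x *m invmx u) = ulsubmx u *m ulsubmx x *m invmx (ulsubmx u),
      drsubmx (u *m x *m invmx u) = drsubmx u *m drsubmx x *m invmx (drsubmx u)
    & lowb (u *m x *m invmx u)].
Proof.
move=> hu Uu hi hx; have [i1 i2] := lowb_inv hu Uu hi.
have [a1 a2 a3] := lowb_mul hu hx.
have [b1 b2 b3] := lowb_mul a3 hi.
by rewrite b1 b2 a1 a2 i1 i2.
Qed.

End Blk.
End D.
Section E.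
Variable k : fieldType.

Definition sl m (x : 'M[k]_m) := forall i j : 'I_m, (i <= j)%N -> x i j = 0.

Lemma sl_pow m (x : 'M[k]_m) : sl x -> forall j (i l : 'I_m), (i < l + j)%N -> (x ^+ j) i l = 0.
Proof.
move=> hx; elim=> [|j IH] i l hil.
  rewrite expr0 mxE; case: eqP => // eil; move: hil.
  by rewrite eil addn0 ltnn.
rewrite exprS -mulmxE mxE big1 // => q _.
case: (leqP i q) => iq; first by rewrite hx // mul0r.
by rewrite IH ?mulr0 //; move: hil iq; rewrite addnS; lia.
Qed.

Lemma sl_nil m (x : 'M[k]_m) : sl x -> x ^+ m = 0.
Proof.
move=> hx; apply/matrixP => i l; rewrite mxE sl_pow //.
by have := ltn_ord i; lia.
Qed.

Lemma linsub_sl m : linsub (@sl m).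
Proof.
split; first by move=> i j _; rewrite mxE.
by move=> c x y hx hy i j hij; rewrite !mxE hx // hy // mulr0 addr0.
Qed.

Lemma complete_top r s (B : 'M[k]_(r, r + s)) : row_free B ->
  exists P : 'M_(r + s), P \in unitmx /\ usubmx P = B.
Proof.
move=> fB.
pose U : 'M[k]_(r, r + s) := row_mx 1%:M 0.
pose f : 'M[k]_(r + s) := col_mx B 0.
have Uf : U *m f = B by rewrite mul_row_col mul1mx mul0mx addr0.
have rU : \rank (U *m f) = \rank U.
  apply/eqP; rewrite eqn_leq mxrankM_maxl /= Uf.
  move/eqP: fB => ->; exact: rank_leq_row.
have [g Ug Hg] := complete_unitmx rU.
exists g; split => //.
by rewrite -Uf Hg /U -{2}[g]vsubmxK mul_row_col mul1mx mul0mx addr0.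
Qed.

Lemma invmx_mul n (A B : 'M[k]_n) : A \in unitmx -> B \in unitmx ->
  invmx (A *m B) = invmx B *m invmx A.
Proof.
move=> UA UB; apply/esym/inv_of_mul1.
by rewrite mulmxA -(mulmxA A) mulmxV // mulmx1 mulmxV.
Qed.

Lemma unit_pow n (a : 'M[k]_n) j : a \in unitmx -> a ^+ j \in unitmx.
Proof.
move=> Ua; elim: j => [|j IH]; first by rewrite expr0 unitmx1.
by rewrite exprS -mulmxE unitmx_mul Ua.
Qed.

Lemma trig m (a : 'M[k]_m) : nilp a -> exists g, g \in unitmx /\ sl (g *m a *m invmx g).
Proof.
elim: m a => [|m IH] a na.
  by exists 1%:M; split; [apply: unitmx1 | move=> [] ].
have nU : a \notin unitmx.
  case: na => j hj; apply/negP => /(unit_pow j); rewrite hj unitmxE det0.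
  by rewrite unitr0.
have K0 : kermx a != 0 by rewrite kermx_eq0 row_free_unit.
have [i rowi] : exists i, row i (kermx a) != 0.
  apply/existsP; apply: contraR K0 => /existsPn h; apply/eqP/row_matrixP => i.
  by rewrite row0; apply/eqP; move: (h i); rewrite negbK.
set w := row i (kermx a).
have wa : w *m a = 0 by rewrite /w -row_mul mulmx_ker row0.
have fw : row_free (w : 'M_(1, 1 + m)) by rewrite /row_free rank_rV rowi.
have [P [UP HP]] := complete_top fw.
pose a' : 'M[k]_(1 + m) := P *m a *m invmx P.
have ua' : usubmx a' = 0 by rewrite /a' -!mul_usub_mx HP wa mul0mx.
have la' : lowb a' by rewrite /lowb /ursubmx ua'; apply/matrixP => ? ?; rewrite !mxE.
have ula' : ulsubmx a' = 0 by rewrite /ulsubmx ua'; apply/matrixP => ? ?; rewrite !mxE.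
have nd : nilp (drsubmx a').
  have [j hj] := nilp_conj UP na.
  exists j; have [_ h2 _] := lowb_pow j la'; rewrite -h2 -/a' hj.
  by apply/matrixP => ? ?; rewrite !mxE.
have [h [Uh slh]] := IH _ nd.
pose Q : 'M[k]_(1 + m) := block_mx 1%:M 0 0 h.
have UQ : Q \in unitmx by rewrite block_diag_mx_unit unitmx1 Uh.
have iQ : invmx Q = block_mx 1%:M 0 0 (invmx h) by rewrite invmx_block_diag // invmx1.
have lQ : lowb Q by rewrite /lowb block_mxKur.
have liQ : lowb (invmx Q) by rewrite /lowb iQ block_mxKur.
have [c1 c2 c3] := lowb_conj lQ UQ liQ la'.
exists (Q *m P); split; first by rewrite unitmx_mul UQ UP.
have -> : Q *m P *m a *m invmx (Q *m P) = Q *m a' *m invmx Q.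
  by rewrite invmx_mul // /a' !mulmxA.
move: c1 c2 c3; set y := Q *m a' *m invmx Q.
rewrite /Q block_mxKul block_mxKdr ula' mul1mx mul0mx => yul ydr yur.
rewrite -[y]submxK yul ydr yur.
move=> i1 j1; rewrite -(@splitK 1 m i1) -(@splitK 1 m j1).
case: (@split 1 m i1) => i2; case: (@split 1 m j1) => j2 /=.
- by move=> _; apply: etrans (block_mxEul _ _ _ _ _ _) _; rewrite mxE.
- by move=> _; apply: etrans (block_mxEur _ _ _ _ _ _) _; rewrite mxE.
- by move=> h2; exfalso; have := ltn_ord j2; lia.
- by move=> h2; apply: etrans (block_mxEdr _ _ _ _ _ _) _; apply: slh; move: h2; lia.
Qed.

End E.
Section F.
Variable k : closedFieldType.

Definition Tprop n (E : 'M[k]_n -> Prop) :=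
  exists L : 'M[k]_n -> Prop, [/\ linsub L, (forall x, L x -> E x /\ nilp x)
    & (forall N, E N -> nilp N -> exists u, [/\ E u, u \in unitmx & L (u *m N *m invmx u)])].

Section Step.
Variables m n : nat.
Implicit Types x y : 'M[k]_(m + n).

Lemma ulL c x y : ulsubmx (c *: x + y) = c *: ulsubmx x + ulsubmx y.
Proof. by apply/matrixP => i j; rewrite !mxE. Qed.
Lemma drL c x y : drsubmx (c *: x + y) = c *: drsubmx x + drsubmx y.
Proof. by apply/matrixP => i j; rewrite !mxE. Qed.
Lemma ulB x y : ulsubmx (x - y) = ulsubmx x - ulsubmx y.
Proof. by apply/matrixP => i j; rewrite !mxE. Qed.
Lemma drB x y : drsubmx (x - y) = drsubmx x - drsubmx y.
Proof. by apply/matrixP => i j; rewrite !mxE. Qed.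
Lemma ul0 : ulsubmx (0 : 'M[k]_(m + n)) = 0.
Proof. by apply/matrixP => i j; rewrite !mxE. Qed.
Lemma dr0 : drsubmx (0 : 'M[k]_(m + n)) = 0.
Proof. by apply/matrixP => i j; rewrite !mxE. Qed.

Variable E : 'M[k]_(m + n) -> Prop.
Hypothesis HE : subalg E.
Hypothesis Hlow : forall x, E x -> lowb x.
Let E1 := fun a => exists x, E x /\ ulsubmx x = a.
Let E2 := fun d => exists x, E x /\ drsubmx x = d.
Hypothesis Hirr : irr E1.
Hypothesis HT2 : Tprop E2.

Lemma sub1 : subalg E1.
Proof.
split.
- by exists 1%:M; split; [apply: sa1 | apply: ul1].
- move=> _ _ [x [Ex <-]] [y [Ey <-]]; exists (x *m y); split; first exact: saM.
  by have [-> _ _] := lowb_mul (Hlow Ex) (Hlow Ey).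
- move=> c _ _ [x [Ex <-]] [y [Ey <-]]; exists (c *: x + y); split; first exact: saL.
  by rewrite ulL.
Qed.

Lemma sub2 : subalg E2.
Proof.
split.
- by exists 1%:M; split; [apply: sa1 | apply: dr1].
- move=> _ _ [x [Ex <-]] [y [Ey <-]]; exists (x *m y); split; first exact: saM.
  by have [_ -> _] := lowb_mul (Hlow Ex) (Hlow Ey).
- move=> c _ _ [x [Ex <-]] [y [Ey <-]]; exists (c *: x + y); split; first exact: saL.
  by rewrite drL.
Qed.

Lemma allE1 : forall a, E1 a.
Proof. exact: burnside sub1 Hirr. Qed.

Lemma conjE u x : E u -> u \in unitmx -> E x ->
  [/\ E (u *m x *m invmx u),
      ulsubmx (u *m x *m invmx u) = ulsubmx u *m ulsubmx x *m invmx (ulsubmx u)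
    & drsubmx (u *m x *m invmx u) = drsubmx u *m drsubmx x *m invmx (drsubmx u)].
Proof.
move=> Eu Uu Ex; have Ei := sa_inv HE Eu Uu.
have [h1 h2 _] := lowb_conj (Hlow Eu) Uu (Hlow Ei) (Hlow Ex).
by split => //; apply: saM => //; apply: saM.
Qed.

Lemma nil_parts x : E x -> nilp x -> nilp (ulsubmx x) /\ nilp (drsubmx x).
Proof.
move=> Ex [j hj]; have [h1 h2 _] := lowb_pow j (Hlow Ex).
by split; exists j; rewrite -?h1 -?h2 hj ?ul0 ?dr0.
Qed.

Lemma delta_sandwich p (a : 'M[k]_p) (i q r j : 'I_p) :
  delta_mx i q *m a *m delta_mx r j = a q r *: delta_mx i j.
Proof.
apply/matrixP => s t; rewrite !mxE (bigD1 r) //= big1 => [|v vr]; last first.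
  by rewrite [delta_mx r j v t]mxE (negbTE vr) /= mulr0.
rewrite addr0 [delta_mx r j r t]mxE eqxx /=.
rewrite [(delta_mx i q *m a) s r]mxE (bigD1 q) //= big1 => [|v vq]; last first.
  by rewrite [delta_mx i q s v]mxE (negbTE vq) andbF mul0r.
rewrite addr0 [delta_mx i q s q]mxE eqxx andbT.
by case: (s == i); case: (t == j); rewrite /= ?mulr1 ?mul1r ?mulr0 ?mul0r.
Qed.

Lemma stepT : Tprop E.
Proof.
have [L2 [lin2 nil2 conj2]] := HT2.
have inv_low : forall u, E u -> u \in unitmx -> lowb (invmx u).
  by move=> u Eu Uu; apply: Hlow; apply: sa_inv.
case: (classic (exists x0, [/\ E x0, drsubmx x0 = 0 & ulsubmx x0 != 0])) => [[x0 [Ex0 dx0 ax0]]|nA].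
- (* product case *)
  pose I a := exists x, [/\ E x, drsubmx x = 0 & ulsubmx x = a].
  have IL : forall c a b, I a -> I b -> I (c *: a + b).
    move=> c _ _ [x [Ex dx <-]] [y [Ey dy <-]]; exists (c *: x + y); split.
    + exact: saL.
    + by rewrite drL dx dy scaler0 addr0.
    + by rewrite ulL.
  have I0 : I 0 by exists 0; split; [apply: sa0 | apply: dr0 | apply: ul0].
  have [p [q apq]] : exists p q, ulsubmx x0 p q != 0.
    case: (pickP (fun pq : 'I_m * 'I_m => ulsubmx x0 pq.1 pq.2 != 0)) => [[p q] /= apq|h].
      by exists p, q.
    case/negP: ax0; apply/eqP/matrixP => p q; move: (h (p, q)) => /= /negbFE/eqP ->.
    by rewrite mxE.
  have Idelta : forall i j, I (delta_mx i j).
    move=> i j.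
    have [y [Ey ay]] := allE1 (delta_mx i p).
    have [z [Ez az]] := allE1 (delta_mx q j).
    have Ex : E (y *m x0 *m z) by apply: saM => //; apply: saM.
    have [b1 b2 b3] := lowb_mul (Hlow Ey) (Hlow Ex0).
    have [c1 c2 c3] := lowb_mul b3 (Hlow Ez).
    have Ia : I (ulsubmx x0 p q *: delta_mx i j).
      exists (y *m x0 *m z); split => //.
      + by rewrite c2 b2 dx0 mulmx0 mul0mx.
      + by rewrite c1 b1 ay az delta_sandwich.
    have := IL ((ulsubmx x0 p q)^-1) _ _ Ia I0.
    by rewrite addr0 scalerA mulVf // scale1r.
  have Iall : forall a, I a.
    move=> a; rewrite (matrix_sum_delta a).
    have Isum : forall (J : Type) (r : seq J) (P : pred J) (F : J -> 'M_m),
        (forall i, P i -> I (F i)) -> I (\sum_(i <- r | P i) F i).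
      move=> J r P F h; apply: (big_ind I I0); last exact: h.
      by move=> a1 b1 Ia Ib; have := IL 1 _ _ Ia Ib; rewrite scale1r.
    apply: (Isum) => i _; apply: (Isum) => j _.
    by have := IL (a i j) _ _ (Idelta i j) I0; rewrite addr0.
  exists (fun x => [/\ E x, sl (ulsubmx x) & L2 (drsubmx x)]); split.
  + split; first by split; [apply: sa0 | rewrite ul0; apply: (linsub_sl k m).1 | rewrite dr0; apply: lin2.1].
    move=> c x y [Ex sx lx] [Ey sy ly]; split; first exact: saL.
    * by rewrite ulL; apply: (linsub_sl k m).2.
    * by rewrite drL; apply: lin2.2.
  + move=> x [Ex sx lx]; split => //; apply: lowb_nil (Hlow Ex) _ _.
    * by exists m; apply: sl_nil.
    * by have [_ ] := nil2 _ lx.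
  + move=> N EN nN; have [naN ndN] := nil_parts EN nN.
    have [g [Ug slg]] := trig naN.
    have E2N : E2 (drsubmx N) by exists N.
    have [u2 [[x1 [Ex1 dx1]] Uu2 Lu2]] := conj2 _ E2N ndN.
    have [x2 [Ex2 dx2 ax2]] := Iall (g - ulsubmx x1).
    pose u := x1 + x2.
    have Eu : E u by apply: saD.
    have au : ulsubmx u = g by rewrite /u -(scale1r x1) ulL scale1r ax2 addrC subrK.
    have du : drsubmx u = u2 by rewrite /u -(scale1r x1) drL scale1r dx2 addr0.
    have Uu : u \in unitmx by rewrite lowb_unit ?au ?du ?Ug ?Uu2 //; apply: Hlow.
    have [c1 c2 c3] := conjE Eu Uu EN.
    exists u; split => //; split => //.
    * by rewrite c2 au.
    * by rewrite c3 du.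
- (* graph case *)
  have gr : forall x, E x -> drsubmx x = 0 -> ulsubmx x = 0.
    move=> x Ex dx; case: (eqVneq (ulsubmx x) 0) => // ax.
    by case: nA; exists x; split.
  exists (fun x => E x /\ L2 (drsubmx x)); split.
  + split; first by split; [apply: sa0 | rewrite dr0; apply: lin2.1].
    move=> c x y [Ex lx] [Ey ly]; split; first exact: saL.
    by rewrite drL; apply: lin2.2.
  + move=> x [Ex lx]; split => //.
    have [_ [j hj]] := nil2 _ lx.
    apply: lowb_nil (Hlow Ex) _ _; last by exists j.
    have [h1 h2 _] := lowb_pow j (Hlow Ex).
    exists j; rewrite -h1; apply: gr; first exact: saX.
    by rewrite h2.
  + move=> N EN nN; have [naN ndN] := nil_parts EN nN.
    have E2N : E2 (drsubmx N) by exists N.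
    have [u2 [[x1 [Ex1 dx1]] Uu2 Lu2]] := conj2 _ E2N ndN.
    have E2u2 : E2 u2 by exists x1.
    have [y [Ey dy]] := sa_inv sub2 E2u2 Uu2.
    have z0 : ulsubmx (x1 *m y - 1%:M) = 0.
      apply: gr; first by apply: saB => //; [apply: saM | apply: sa1].
      have [_ h2 _] := lowb_mul (Hlow Ex1) (Hlow Ey).
      by rewrite drB h2 dx1 dy mulmxV // dr1 subrr.
    have Ua1 : ulsubmx x1 \in unitmx.
      have [h1 _ _] := lowb_mul (Hlow Ex1) (Hlow Ey).
      by move: z0; rewrite ulB h1 ul1 => /eqP; rewrite subr_eq0 => /eqP /mulmx1_unit [].
    have Ux1 : x1 \in unitmx by rewrite lowb_unit ?Ua1 ?dx1 ?Uu2 //; apply: Hlow.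
    have [c1 c2 c3] := conjE Ex1 Ux1 EN.
    exists x1; split => //; split => //.
    by rewrite c3 dx1.
Qed.

End Step.
End F.
Section G.
Variable k : closedFieldType.

Lemma Tprop_conj n (E : 'M[k]_n -> Prop) (P : 'M[k]_n) : P \in unitmx ->
  Tprop (fun y => E (invmx P *m y *m P)) -> Tprop E.
Proof.
move=> UP [L [[L0 LL] Lnil Lconj]].
have UiP : invmx P \in unitmx by rewrite unitmx_inv.
exists (fun x => L (P *m x *m invmx P)); split.
- split; first by rewrite mulmx0 mul0mx.
  by move=> c x y Lx Ly; rewrite mulmxDr mulmxDl -scalemxAr -scalemxAl; apply: LL.
- move=> x /Lnil [Ex nx]; split.
    by move: Ex; rewrite !mulmxA mulVmx // mul1mx -mulmxA mulVmx // mulmx1.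
  by have := nilp_conj UiP nx; rewrite invmxK !mulmxA mulVmx // mul1mx -mulmxA mulVmx // mulmx1.
- move=> N EN nN.
  have EN' : E (invmx P *m (P *m N *m invmx P) *m P).
    by rewrite !mulmxA mulVmx // mul1mx -mulmxA mulVmx // mulmx1.
  have [u' [Eu' Uu' Lu']] := Lconj _ EN' (nilp_conj UP nN).
  exists (invmx P *m u' *m P); split => //.
  + by rewrite unitmx_mul unitmx_mul UiP Uu' UP.
  + rewrite invmx_mul ?unitmx_mul ?UiP // invmx_mul // invmxK.
    have e : P *m (invmx P *m u' *m P *m N *m (invmx P *m (invmx u' *m P))) *m invmx P
            = u' *m (P *m N *m invmx P) *m invmx u'.
      by rewrite !mulmxA mulmxV // mul1mx mulmxK.
    by rewrite e.
Qed.

Lemma Tprop0 (E : 'M[k]_0 -> Prop) : subalg E -> Tprop E.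
Proof.
move=> HE; have all0 : forall x : 'M[k]_0, x = 0 by move=> x; apply/matrixP => [[]].
exists (fun _ => True); split => //.
- move=> x _; split; first by rewrite (all0 x); apply: sa0.
  by exists 1%N; rewrite expr1 (all0 x).
- by move=> N _ _; exists 1%:M; split => //; [apply: sa1 | apply: unitmx1].
Qed.

Theorem mainT n (E : 'M[k]_n -> Prop) : subalg E -> Tprop E.
Proof.
elim/ltn_ind: n E => n IH E HE.
case: n IH E HE => [|n0] IH E HE; first exact: Tprop0.
set n := n0.+1 in IH E HE *.
pose Pr r := exists B : 'M[k]_(r, n), [/\ row_free B, (0 < r)%N & forall x, E x -> (B *m x <= B)%MS].
have [p Hp] := classic_pred Pr.
have exP : exists r, p r.
  exists n; apply/Hp; exists 1%:M; split => //; first by rewrite /row_free mxrank1.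
  by move=> x _; apply: submx_full; rewrite /row_full mxrank1.
have := ex_minnP exP; case=> m /Hp [B [fB m0 stB]] minm.
have mn : (m <= n)%N by move/eqP: fB => <-; apply: rank_leq_col.
have en : n = (m + (n - m))%N by rewrite subnKC.
move: (n - m)%N en => n' en.
clearbody n; subst n.
have [P [UP HP]] := complete_top fB.
apply: (Tprop_conj UP).
set E' := fun y => E (invmx P *m y *m P).
have HE' : subalg E'.
  split; rewrite /E'.
  - by rewrite mulmx1 mulVmx //; apply: sa1.
  - move=> x y Ex Ey.
    have -> : invmx P *m (x *m y) *m P = (invmx P *m x *m P) *m (invmx P *m y *m P).
      by rewrite !mulmxA -(mulmxA _ P (invmx P)) mulmxV // mulmx1.
    exact: saM.
  - move=> c x y Ex Ey; rewrite mulmxDr mulmxDl -scalemxAr -scalemxAl.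
    exact: saL.
have key : forall y, E' y ->
    ursubmx y = 0 /\ B *m (invmx P *m y *m P) = ulsubmx y *m B.
  move=> y Ey.
  have [D HD] : exists D, B *m (invmx P *m y *m P) = D *m B.
    by apply/submxP; apply: stB.
  have uy : usubmx y = D *m usubmx (1%:M : 'M[k]_(m + n')).
    have : usubmx y *m P = B *m (invmx P *m y *m P).
      by rewrite -HP mul_usub_mx !mulmxA !mul_usub_mx mulmxV // mul1mx.
    rewrite HD -HP => /(congr1 (mulmx^~ (invmx P))).
    by rewrite mulmxK // -mulmxA mul_usub_mx mulmxV.
  have u1 : usubmx (1%:M : 'M[k]_(m + n')) = row_mx 1%:M 0.
    by rewrite (scalar_mx_block m n') /block_mx col_mxKu.
  rewrite u1 mul_mx_row mulmx1 mulmx0 in uy.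
  have yur : ursubmx y = 0 by rewrite /ursubmx uy row_mxKr.
  have yul : ulsubmx y = D by rewrite /ulsubmx uy row_mxKl.
  by rewrite yul.
apply: stepT => //.
- by move=> y /key [].
- move=> U stU.
  pose W := U *m B.
  have stW : forall x, E x -> (W *m x <= W)%MS.
    move=> x Ex.
    have Ey : E' (P *m x *m invmx P).
      by rewrite /E' !mulmxA mulVmx // mul1mx -mulmxA mulVmx // mulmx1.
    have [_ kx] := key _ Ey.
    move: kx; rewrite !mulmxA !mulmxKV // => kx.
    rewrite /W -mulmxA kx mulmxA.
    have : (U *m ulsubmx (P *m x *m invmx P) <= U)%MS by apply: stU; exists (P *m x *m invmx P).
    by case/submxP=> D ->; rewrite -mulmxA submxMl.
  have rW : \rank W = \rank U by rewrite /W mxrankMfree.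
  have rU := rank_leq_col U.
  case: (posnP (\rank U)) => [rU0|rUp].
    by left; apply/eqP; rewrite -mxrank_eq0 rU0.
  case: (ltnP (\rank U) m) => [rUm|rUm].
    exfalso; have : p (\rank W).
      apply/Hp; exists (row_base W); split => //.
      + exact: row_base_free.
      + by rewrite rW.
      + move=> x Ex; rewrite !(eqmxMr _ (eq_row_base W)) !eq_row_base.
        exact: stW.
    by move/minm; rewrite rW leqNgt rUm.
  by right; rewrite /row_full eqn_leq rU rUm.
- apply: IH; last first.
    split.
    + by exists 1%:M; split; [apply: sa1 | apply: dr1].
    + move=> _ _ [x [Ex <-]] [y [Ey <-]]; exists (x *m y); split; first exact: saM.
      by have [_ -> _] := lowb_mul (proj1 (key _ Ex)) (proj1 (key _ Ey)).
    + move=> c _ _ [x [Ex <-]] [y [Ey <-]]; exists (c *: x + y); split; first exact: saL.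
      by rewrite drL.
  by rewrite -addn1 addnC leq_add2r.
Qed.

End G.
Section H.
Variable k : closedFieldType.

Lemma mxpow_exp n (N : 'M[k]_n) m : mxpow N m = N ^+ m.
Proof. by elim: m => [|m IH]; rewrite ?expr0 // exprS /mxpow iterS -/(mxpow N m) IH mulmxE. Qed.

Lemma nilp_n n (N : 'M[k]_n) : nilp N -> N ^+ n = 0.
Proof.
move=> nN; have [g [Ug slg]] := trig nN.
have := sl_nil slg; rewrite conj_pow // => h.
have := congr1 (fun X => invmx g *m X *m g) h.
by rewrite !mulmxA mulVmx // mul1mx mulmxKV // mulmx0 mul0mx => ->.
Qed.

Lemma subalg_End (A : falgType k) n (rho : A -> 'M[k]_n) : subalg (is_End rho).
Proof.
split; rewrite /is_End.
- by move=> a; rewrite mul1mx mulmx1.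
- by move=> x y Ex Ey a; rewrite -mulmxA Ey !mulmxA Ex.
- by move=> c x y Ex Ey a; rewrite mulmxDl mulmxDr -scalemxAl -scalemxAr Ex Ey.
Qed.

Lemma NEndE (A : falgType k) n (rho : A -> 'M[k]_n) N : NEnd rho N <-> is_End rho N /\ nilp N.
Proof.
rewrite /NEnd /nilp; split; case=> h [m hm]; split => //; exists m; first by rewrite -mxpow_exp.
by rewrite mxpow_exp.
Qed.

Lemma map_mx_pow (R S : comNzRingType) (f : {rmorphism R -> S}) n (X : 'M[R]_n) j :
  map_mx f (X ^+ j) = (map_mx f X) ^+ j.
Proof.
elim: j => [|j IH]; first by rewrite !expr0 map_mx1.
by rewrite !exprS -!mulmxE map_mxM IH.
Qed.

Section Closed.
Variable n : nat.
Definition Xg : 'M[{mpoly k[n * n]}]_n := \matrix_(i, j) 'X_(mxvec_index i j).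
Definition Cm (B : 'M[k]_n) : 'M[{mpoly k[n * n]}]_n := map_mx (fun c => c%:MP_[n * n]) B.

Lemma ev_Xg M : map_mx (meval (mx_coords M)) Xg = M.
Proof. by apply/matrixP => i j; rewrite !mxE mevalXU /mx_coords mxvecE. Qed.
Lemma ev_Cm M B : map_mx (meval (mx_coords M)) (Cm B) = B.
Proof. by apply/matrixP => i j; rewrite !mxE mevalC. Qed.

Lemma entry_ev (v : 'I_(n * n) -> k) (X : 'M[{mpoly k[n * n]}]_n) i j :
  (X i j).@[v] = (map_mx (meval v) X) i j.
Proof. by rewrite mxE. Qed.

Lemma closed_NEnd (A : falgType k) (rho : A -> 'M[k]_n) : zariski_closed (NEnd rho).
Proof.
exists (fun p => (exists a i j, p = (Xg *m Cm (rho a) - Cm (rho a) *m Xg) i j)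
              \/ (exists i j, p = (Xg ^+ n) i j)) => M.
have ev1 : forall a i j, ((Xg *m Cm (rho a) - Cm (rho a) *m Xg) i j).@[mx_coords M]
                        = (M *m rho a - rho a *m M) i j.
  by move=> a i j; rewrite entry_ev map_mxB !map_mxM ev_Xg ev_Cm.
have ev2 : forall i j, ((Xg ^+ n) i j).@[mx_coords M] = (M ^+ n) i j.
  by move=> i j; rewrite entry_ev map_mx_pow ev_Xg.
rewrite NEndE; split.
- case=> hE nM p [[a [i [j ->]]]|[i [j ->]]].
    by rewrite ev1 hE subrr mxE.
  by rewrite ev2 nilp_n // mxE.
- move=> h; split.
    move=> a; apply/eqP; rewrite -subr_eq0; apply/eqP/matrixP => i j.
    by rewrite [(0 : 'M[k]_n) i j]mxE -ev1; apply: h; left; exists a, i, j.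
  exists n; apply/matrixP => i j.
  by rewrite [(0 : 'M[k]_n) i j]mxE -ev2; apply: h; right; exists i, j.
Qed.
End Closed.
End H.
Section I.
Variable k : closedFieldType.

Lemma poly_vanish (R : {poly k}) : (forall t, R.[t] = 0) -> R = 0.
Proof.
move=> h; apply/eqP; apply: contraT => R0.
have : size (R * 'X + (1 : k)%:P) != 1%N.
  by rewrite size_MXaddC (negbTE R0) /= eqSS size_poly_eq0.
case/closed_rootP => x; rewrite /root hornerD hornerM hornerX hornerC h mul0r add0r.
by rewrite oner_eq0.
Qed.

Lemma scale_pow n (c : k) (x : 'M[k]_n) j : (c *: x) ^+ j = c ^+ j *: x ^+ j.
Proof.
elim: j => [|j IH]; first by rewrite !expr0 scale1r.
by rewrite !exprS -!mulmxE IH -scalemxAl -scalemxAr scalerA.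
Qed.

Lemma nilp_scale n (c : k) (x : 'M[k]_n) : nilp x -> nilp (c *: x).
Proof. by case=> j hj; exists j; rewrite scale_pow hj scaler0. Qed.

Lemma adj_unit n (v : 'M[k]_n) : v \in unitmx -> \adj v = \det v *: invmx v.
Proof.
move=> Uv; rewrite /invmx Uv scalerA mulfV ?scale1r //.
by move: Uv; rewrite unitmxE unitfE.
Qed.

Lemma irr_from_T n (E : 'M[k]_n -> Prop) (S : 'M[k]_n -> Prop) :
  subalg E -> (forall N, S N <-> E N /\ nilp N) -> Tprop E -> zariski_irreducible S.
Proof.
move=> HE HS [L [[L0 LL] Lnil Lconj]].
split.
  by exists 0; apply/HS; split; [apply: sa0 | exists 1%N; rewrite expr1].
move=> Z1 Z2 [F1 HF1] [F2 HF2] cover.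
case: (classic (forall M, S M -> Z1 M)) => [h|h1]; first by left.
case: (classic (forall M, S M -> Z2 M)) => [h|h2]; first by right.
exfalso.
have [N [SN nZ1]] : exists N, S N /\ ~ Z1 N.
  apply: NNPP => c; apply: h1 => M SM; apply: NNPP => nz; apply: c; exists M; by split.
have [M [SM nZ2]] : exists M, S M /\ ~ Z2 M.
  apply: NNPP => c; apply: h2 => M SM; apply: NNPP => nz; apply: c; exists M; by split.
have [p1 [F1p1 p1N]] : exists p, F1 p /\ p.@[mx_coords N] <> 0.
  apply: NNPP => c; apply: nZ1; apply/HF1 => p Fp; apply: NNPP => ne; apply: c; exists p; by split.
have [p2 [F2p2 p2M]] : exists p, F2 p /\ p.@[mx_coords M] <> 0.
  apply: NNPP => c; apply: nZ2; apply/HF2 => p Fp; apply: NNPP => ne; apply: c; exists p; by split.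
have LZ : forall c x, L x -> L (c *: x) by move=> c x Lx; have := LL c x 0 Lx L0; rewrite addr0.
have rep : forall N, S N -> exists v y, [/\ E v, v \in unitmx, L y & v *m y *m \adj v = N].
  move=> N0 /HS [EN0 nN0]; have [u [Eu Uu Lu]] := Lconj N0 EN0 nN0.
  exists (invmx u), ((\det (invmx u))^-1 *: (u *m N0 *m invmx u)); split.
  - exact: sa_inv.
  - by rewrite unitmx_inv.
  - exact: LZ.
  - have Ui : invmx u \in unitmx by rewrite unitmx_inv.
    have d0 : \det (invmx u) != 0 by move: Ui; rewrite unitmxE unitfE.
    rewrite adj_unit // invmxK -!scalemxAr -!scalemxAl scalerA mulfV // scale1r.
    by rewrite !mulmxA mulVmx // mul1mx mulmxKV.
have [v1 [y1 [Ev1 Uv1 Ly1 G1]]] := rep N SN.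
have [v2 [y2 [Ev2 Uv2 Ly2 G2]]] := rep M SM.
pose PC (X : 'M[k]_n) : 'M[{poly k}]_n := map_mx polyC X.
pose Vp := PC v1 + 'X *: PC (v2 - v1).
pose Yp := PC y1 + 'X *: PC (y2 - y1).
pose Gp := Vp *m Yp *m \adj Vp.
pose vt t := v1 + t *: (v2 - v1).
pose yt t := y1 + t *: (y2 - y1).
have evV : forall t, map_mx (horner_eval t) Vp = vt t.
  by move=> t; apply/matrixP => i j; rewrite !mxE /= horner_evalE hornerD hornerM hornerX !hornerC.
have evY : forall t, map_mx (horner_eval t) Yp = yt t.
  by move=> t; apply/matrixP => i j; rewrite !mxE /= horner_evalE hornerD hornerM hornerX !hornerC.
have evG : forall t, map_mx (horner_eval t) Gp = vt t *m yt t *m \adj (vt t).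
  by move=> t; rewrite !map_mxM map_mx_adj evV evY.
have vt0 : vt 0 = v1 by rewrite /vt scale0r addr0.
have yt0 : yt 0 = y1 by rewrite /yt scale0r addr0.
have vt1 : vt 1 = v2 by rewrite /vt scale1r addrC subrK.
have yt1 : yt 1 = y2 by rewrite /yt scale1r addrC subrK.
pose dp := \det Vp.
have evd : forall t, dp.[t] = \det (vt t).
  by move=> t; rewrite -evV det_map_mx.
pose Q (p : {mpoly k[n * n]}) : {poly k} :=
  \sum_(m <- msupp p) (p@_m)%:P * \prod_(l < n * n) (mxvec Gp 0 l) ^+ m l.
have evQ : forall p t, (Q p).[t] = p.@[mx_coords (vt t *m yt t *m \adj (vt t))].
  move=> p t; rewrite -evG mevalE horner_sum; apply: eq_bigr => m _.
  rewrite hornerM hornerC horner_prod; congr (_ * _); apply: eq_bigr => l _.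
  by rewrite horner_exp /mx_coords -map_mxvec mxE.
have good : forall t, \det (vt t) != 0 -> S (vt t *m yt t *m \adj (vt t)).
  move=> t dt; have Uvt : vt t \in unitmx by rewrite unitmxE unitfE.
  have Evt : E (vt t) by rewrite /vt addrC; apply: saL => //; apply: saB.
  have Lyt : L (yt t).
    rewrite /yt addrC; apply: (LL) => //.
    by have := LL (-1) y1 y2 Ly1 Ly2; rewrite scaleN1r addrC.
  have [Eyt nyt] := Lnil _ Lyt.
  apply/HS; rewrite adj_unit // -scalemxAr; split.
    by apply: (saZ HE); apply: (saM HE); [apply: (saM HE) | exact: (sa_inv HE Evt Uvt)].
  by apply: nilp_scale; apply: nilp_conj.
pose R := Q p1 * Q p2 * dp.
have R0 : R = 0.
  apply: poly_vanish => t; rewrite /R !hornerM.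
  case: (eqVneq dp.[t] 0) => [->|dt]; first by rewrite mulr0.
  rewrite evd in dt; have St := good t dt.
  case: (cover _ St) => [/HF1 h|/HF2 h].
    by rewrite evQ h // !mul0r.
  by rewrite (evQ p2) h // mulr0 mul0r.
move: R0; rewrite /R => /eqP; rewrite !mulf_eq0 => /orP [/orP [] |] /eqP h.
- by apply: p1N; rewrite -G1 -vt0 -yt0 -evQ h horner0.
- by apply: p2M; rewrite -G2 -vt1 -yt1 -evQ h horner0.
- by move: Uv1; rewrite unitmxE unitfE -vt0 -evd h horner0 eqxx.
Qed.

Theorem lemma2p1' (A : falgType k) (n : nat) (rho : A -> 'M[k]_n) :
  irreducible_variety (NEnd rho).
Proof.
split; first exact: closed_NEnd.
apply: (irr_from_T (subalg_End rho)); first by move=> N; apply: NEndE.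
exact: mainT (subalg_End rho).
Qed.

End I.

Unset Implicit Arguments.

Theorem lemma2p1 (k : closedFieldType) (A : falgType k) (n : nat)
  (rho : A -> 'M[k]_n) (Hrho : is_module_rep rho) :
  irreducible_variety (NEnd rho).
Proof. exact: lemma2p1'. Qed.
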